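(* Let $A\in\mathbb{R}^{m\times n}$ and $B\in\mathbb{R}^{p\times n}$ be such that the stacked matrix $Z=\begin{bmatrix}A\\ B\end{bmatrix}$ has full column rank, and let $Z=QR=\begin{bmatrix}Q_A\\ Q_B\end{bmatrix}R$ be its thin QR decomposition, with $Q\in\mathbb{R}^{(m+p)\times n}$ having orthonormal columns, $Q_A\in\mathbb{R}^{m\times n}$, $Q_B\in\mathbb{R}^{p\times n}$, and $R\in\mathbb{R}^{n\times n}$ upper triangular and nonsingular. Let $k\ge 1$ and suppose matrices $V_k\in\mathbb{R}^{n\times k}$, $U_{k+1}\in\mathbb{R}^{m\times(k+1)}$, $\widehat U_k\in\mathbb{R}^{p\times k}$, a unit vector $v_{k+1}\in\mathbb{R}^n$, scalars $\alpha_{k+1},\check\beta_k\in\mathbb{R}$, and matrices $J_k\in\mathbb{R}^{(k+1)\times k}$, $\check J_k\in\mathbb{R}^{k\times k}$ satisfy $$Q_AV_k=U_{k+1}J_k,\quad Q_A^TU_{k+1}=V_kJ_k^T+\alpha_{k+1}v_{k+1}e_{k+1}^T,$$ $$Q_BV_k=\widehat U_k\check J_k,\quad Q_B^T\widehat U_k=V_k\check J_k^T+\check\beta_kv_{k+1}e_k^T,$$ where $e_j$ denotes the $j$th canonical basis vector of the appropriate dimension. Suppose further that $J_k=X_{k+1}\begin{bmatrix}C_k\\ 0\end{bmatrix}Y_k^T$ and $\check J_k=\widehat X_kS_kY_k^T$, where $X_{k+1}\in\mathbb{R}^{(k+1)\times(k+1)}$, $\widehat X_k,Y_k\in\mathbb{R}^{k\times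 k}$ are orthogonal and $C_k=\mathrm{diag}(\tilde c_1,\dots,\tilde c_k)$, $S_k=\mathrm{diag}(\tilde s_1,\dots,\tilde s_k)$ are diagonal with $\tilde c_i^2+\tilde s_i^2=1$ for all $i$. For $i=1,\dots,k$ let $x_i$, $\hat x_i$, $y_i$ be the $i$th columns of $X_{k+1}$, $\widehat X_k$, $Y_k$, and define $\tilde u_i^A=U_{k+1}x_i$, $\tilde u_i^B=\widehat U_k\hat x_i$, $\tilde g_i=R^{-1}V_ky_i$. Then for each $i=1,\dots,k$, $$\sqrt{\big\|\tilde s_i^2A^T\tilde u_i^A-\tilde c_iB^TB\tilde g_i\big\|_2^2+\big\|\tilde c_i^2B^T\tilde u_i^B-\tilde s_iA^TA\tilde g_i\big\|_2^2}\;\le\;\sqrt{\big(\alpha_{k+1}e_{k+1}^Tx_i\big)^2+\big(\check\beta_ke_k^T\hat x_i\big)^2}\;\|R\|_2 .$$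
   Context: These relations arise from the lower-upper joint Lanczos bidiagonalization of $Q_A$ and $Q_B$ (with $J_k$ lower bidiagonal and $\check J_k$ upper bidiagonal) followed by a CS decomposition of the projected pair $\{J_k,\check J_k\}$; the quadruple $(\tilde c_i/\tilde s_i,\tilde u_i^A,\tilde u_i^B,\tilde g_i)$ is an approximate generalized singular quadruple of the pair $\{A,B\}$, and the left-hand side of the inequality is the residual norm $\|r^{\mathrm{GSVD}}\|_2$ used as a convergence criterion. *)

(* Defs.v *)
From HB Require Import structures.
From mathcomp Require Import all_boot all_order all_algebra.
From mathcomp Require Import boolp classical_sets reals.
Set Implicit Arguments. Unset Strict Implicit. Unset Printing Implicit Defensive.
Import Order.TTheory GRing.Theory Num.Theory.
Local Open Scope ring_scope.
Local Open Scope classical_set_scope.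

Definition vnorm2 {R : realType} {n : nat} (x : 'cV[R]_n) : R :=
  Num.sqrt (\sum_(i < n) x i 0 ^+ 2).

Definition specnorm {R : realType} {m n : nat} (M : 'M[R]_(m, n)) : R :=
  sup [set vnorm2 (M *m x) | x in [set x : 'cV[R]_n | vnorm2 x = 1]].

(* canonical basis column vector e_{j+1} (0-based index j) *)
Definition evec {R : realType} (n j : nat) : 'cV[R]_n :=
  \col_(i < n) ((i : nat) == j)%:R.

Definition upper_tri {R : realType} {n : nat} (M : 'M[R]_n) : Prop :=
  forall i j : 'I_n, (j < i)%N -> M i j = 0.

Definition diag_pad {R : realType} {k : nat} (c : 'rV[R]_k) : 'M[R]_(k.+1, k) :=
  \matrix_(i < k.+1, j < k) (if (i : nat) == (j : nat) then c 0 j else 0).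

(* Main.v *)
Require Import Defs.
From HB Require Import structures.
From mathcomp Require Import all_boot all_order all_algebra.
From mathcomp Require Import boolp classical_sets reals.
From mathcomp Require Import ring lra.
Import Order.TTheory GRing.Theory Num.Theory.
Local Open Scope ring_scope.
Set Implicit Arguments. Unset Strict Implicit.
Section Helpers.
Variable R : realType.

Lemma colM m n q (j : 'I_q) (A : 'M[R]_(m, n)) (B : 'M[R]_(n, q)) :
  col j (A *m B) = A *m col j B.
Proof. by rewrite !colE mulmxA. Qed.

Lemma mul_col1 m n (j : 'I_n) (A : 'M[R]_(m, n)) : A *m col j 1%:M = col j A.
Proof. by rewrite -colM mulmx1. Qed.

Lemma sumsq_ge0 n (a : 'I_n -> R) : 0 <= \sum_i a i ^+ 2.
Proof. by apply: sumr_ge0 => i _; rewrite sqr_ge0. Qed.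

Lemma vnorm2_ge0 n (a : 'cV[R]_n) : 0 <= vnorm2 a.
Proof. exact: sqrtr_ge0. Qed.

Lemma vnorm2_sq n (a : 'cV[R]_n) : vnorm2 a ^+ 2 = \sum_i a i 0 ^+ 2.
Proof. by rewrite /vnorm2 sqr_sqrtr // sumsq_ge0. Qed.

Lemma vnorm2Z n t (a : 'cV[R]_n) : vnorm2 (t *: a) = `|t| * vnorm2 a.
Proof.
rewrite /vnorm2 -sqrtr_sqr -sqrtrM ?sqr_ge0 //; congr Num.sqrt.
by rewrite mulr_sumr; apply: eq_bigr => i _; rewrite mxE exprMn.
Qed.

Lemma CS n (a b : 'I_n -> R) :
  (\sum_i a i * b i) ^+ 2 <= (\sum_i a i ^+ 2) * (\sum_i b i ^+ 2).
Proof.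
set As := \sum_i a i ^+ 2; set Bs := \sum_i b i ^+ 2; set Cs := \sum_i a i * b i.
have H : 0 <= \sum_i \sum_j (a i * b j - a j * b i) ^+ 2.
  by apply: sumr_ge0 => i _; apply: sumr_ge0 => j _; rewrite sqr_ge0.
have inner i : \sum_j (a i * b j - a j * b i) ^+ 2 =
    a i ^+ 2 * Bs + As * b i ^+ 2 - 2 * (a i * b i) * Cs.
  rewrite /Bs /As /Cs mulr_sumr mulr_suml mulr_sumr -big_split -sumrB /=.
  by apply: eq_bigr => j _; ring.
have E : \sum_i \sum_j (a i * b j - a j * b i) ^+ 2 = 2 * (As * Bs) - 2 * Cs ^+ 2.
  under eq_bigr do rewrite inner.
  rewrite sumrB big_split /= -?mulr_suml -?mulr_sumr -?mulr_suml -?mulr_sumr.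
  rewrite -/As -/Bs -/Cs; ring.
have : 0 <= 2 * (As * Bs) - 2 * Cs ^+ 2 by rewrite -E.
lra.
Qed.

Lemma CS' n (a b : 'I_n -> R) :
  \sum_i a i * b i <= Num.sqrt (\sum_i a i ^+ 2) * Num.sqrt (\sum_i b i ^+ 2).
Proof.
rewrite -sqrtrM ?sumsq_ge0 //.
have hn := ler_norm (\sum_i a i * b i). suff h2 : `|\sum_i a i * b i| <= Num.sqrt ((\sum_i a i ^+ 2) * \sum_i b i ^+ 2) by exact: le_trans hn h2.
rewrite -sqrtr_sqr ler_sqrt ?CS //.
by apply: mulr_ge0; apply: sumsq_ge0.
Qed.

Lemma dotE n (a b : 'cV[R]_n) : (a^T *m b) 0 0 = \sum_i a i 0 * b i 0.
Proof. by rewrite mxE; apply: eq_bigr => i _; rewrite mxE. Qed.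

Lemma specnorm_ub m n (M : 'M[R]_(m, n)) x :
  vnorm2 x = 1 -> vnorm2 (M *m x) <= specnorm M.
Proof.
move=> hx; apply: sup_upper_bound; last by exists x.
split; first by exists (vnorm2 (M *m x)), x.
exists (Num.sqrt (\sum_i \sum_j M i j ^+ 2)) => _ [y hy <-].
rewrite /vnorm2 ler_sqrt; last by apply: sumr_ge0 => i _; apply: sumsq_ge0.
apply: ler_sum => i _.
have hy2 : \sum_j y j 0 ^+ 2 = 1.
  by rewrite -vnorm2_sq hy expr1n.
have h := CS (fun j => M i j) (fun j => y j 0); rewrite /= hy2 mulr1 in h.
by rewrite mxE.
Qed.

Lemma specnorm_ge0 n (M : 'M[R]_n) (v : 'cV[R]_n) : vnorm2 v = 1 -> 0 <= specnorm M.
Proof. by move=> hv; apply: le_trans (specnorm_ub M hv); apply: vnorm2_ge0. Qed.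

Lemma specnorm_tr n (M : 'M[R]_n) (v : 'cV[R]_n) :
  vnorm2 v = 1 -> vnorm2 (M^T *m v) <= specnorm M.
Proof.
move=> hv; set w := M^T *m v; set N := vnorm2 w.
have N0 : 0 <= N by apply: vnorm2_ge0.
have [->|Npos] := eqVneq N 0; first exact: specnorm_ge0 hv.
have Ngt : 0 < N by rewrite lt_def Npos N0.
set u := N^-1 *: w.
have hu : vnorm2 u = 1.
  by rewrite vnorm2Z ger0_norm ?invr_ge0 // mulVf.
have key : N ^+ 2 <= N * vnorm2 (M *m u).
  have -> : N * vnorm2 (M *m u) = vnorm2 (M *m w).
    by rewrite /u -scalemxAr vnorm2Z ger0_norm ?invr_ge0 // mulrA mulfV // mul1r.
  rewrite vnorm2_sq.
  have -> : \sum_i w i 0 ^+ 2 = (w^T *m w) 0 0.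
    by rewrite dotE; apply: eq_bigr => i _; rewrite expr2.
  rewrite {1}/w trmx_mul trmxK -mulmxA dotE.
  apply: le_trans (CS' (fun i => v i 0) (fun i => (M *m w) i 0)) _.
  by rewrite -/(vnorm2 v) hv mul1r.
have : vnorm2 (M *m u) <= specnorm M by apply: specnorm_ub.
have : N <= vnorm2 (M *m u).
  by rewrite -(ler_pM2l Ngt) -expr2.
lra.
Qed.

Lemma dp1 k (c : 'rV[R]_k) (i : 'I_k) :
  (diag_pad c)^T *m col (widen_ord (leqnSn k) i) 1%:M = c 0 i *: col i 1%:M.
Proof.
rewrite mul_col1; apply/matrixP => a b; rewrite !mxE /=.
case: (eqVneq a i) => [->|ne]; first by rewrite !eqxx mulr1.
rewrite mulr0.
have /negbTE -> // : (i : nat) != a.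
by rewrite eq_sym; apply: contra ne => /eqP h; apply/eqP/val_inj.
Qed.

Lemma dp2 k (c : 'rV[R]_k) (i : 'I_k) :
  diag_pad c *m col i 1%:M = c 0 i *: col (widen_ord (leqnSn k) i) 1%:M.
Proof.
rewrite mul_col1; apply/matrixP => a b; rewrite !mxE /=.
case: (eqVneq (a : nat) i) => [e|ne].
  have -> : a = widen_ord (leqnSn k) i by apply/val_inj.
  by rewrite !eqxx mulr1.
have /negbTE -> : a != widen_ord (leqnSn k) i by apply: contra ne => /eqP ->.
by rewrite mulr0.
Qed.

Lemma dg k (s : 'rV[R]_k) (i : 'I_k) :
  diag_mx s *m col i 1%:M = s 0 i *: col i 1%:M.
Proof.
rewrite mul_col1; apply/matrixP => a b; rewrite !mxE /=.
case: (eqVneq a i) => [->|ne]; rewrite /=; first by rewrite mulr1.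
by rewrite mulr0.
Qed.

Lemma fin (c s x y : R) : c ^+ 2 + s ^+ 2 = 1 ->
  (s ^+ 2 * x - c * s * y) ^+ 2 + (c ^+ 2 * y - s * c * x) ^+ 2 <= x ^+ 2 + y ^+ 2.
Proof.
move=> h.
have -> : (s ^+ 2 * x - c * s * y) ^+ 2 + (c ^+ 2 * y - s * c * x) ^+ 2
   = (c ^+ 2 + s ^+ 2) * (s * x - c * y) ^+ 2 by ring.
have -> : x ^+ 2 + y ^+ 2 = (c ^+ 2 + s ^+ 2) * (x ^+ 2 + y ^+ 2) by rewrite h mul1r.
have -> : (c ^+ 2 + s ^+ 2) * (x ^+ 2 + y ^+ 2) = (s * x - c * y) ^+ 2 + (c * x + s * y) ^+ 2 by ring.
by rewrite h mul1r lerDl sqr_ge0.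
Qed.

End Helpers.
Unset Implicit Arguments.
Theorem mainTheorem1 (R : realType) (m p n k : nat)
  (A : 'M[R]_(m, n)) (B : 'M[R]_(p, n))
  (QA : 'M[R]_(m, n)) (QB : 'M[R]_(p, n)) (Rm : 'M[R]_n)
  (Vk : 'M[R]_(n, k)) (U : 'M[R]_(m, k.+1)) (Uh : 'M[R]_(p, k))
  (v : 'cV[R]_n) (alpha betac : R)
  (J : 'M[R]_(k.+1, k)) (Jc : 'M[R]_k)
  (X : 'M[R]_k.+1) (Xh Y : 'M[R]_k) (c s : 'rV[R]_k) :
  \rank (col_mx A B) = n ->
  col_mx A B = col_mx QA QB *m Rm ->
  (col_mx QA QB)^T *m col_mx QA QB = 1%:M ->
  upper_tri Rm -> Rm \in unitmx ->
  (0 < k)%N ->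
  vnorm2 v = 1 ->
  QA *m Vk = U *m J ->
  QA^T *m U = Vk *m J^T + alpha *: (v *m (evec k.+1 k)^T) ->
  QB *m Vk = Uh *m Jc ->
  QB^T *m Uh = Vk *m Jc^T + betac *: (v *m (evec k k.-1)^T) ->
  J = X *m diag_pad c *m Y^T ->
  Jc = Xh *m diag_mx s *m Y^T ->
  X^T *m X = 1%:M -> Xh^T *m Xh = 1%:M -> Y^T *m Y = 1%:M ->
  (forall i : 'I_k, c 0 i ^+ 2 + s 0 i ^+ 2 = 1) ->
  forall i : 'I_k,
    let xi := col (widen_ord (leqnSn k) i) X in
    let xhi := col i Xh in
    let yi := col i Y in
    let uA := U *m xi in
    let uB := Uh *m xhi in
    let g := invmx Rm *m Vk *m yi in
    Num.sqrt (vnorm2 (s 0 i ^+ 2 *: (A^T *m uA) - c 0 i *: (B^T *m B *m g)) ^+ 2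
            + vnorm2 (c 0 i ^+ 2 *: (B^T *m uB) - s 0 i *: (A^T *m A *m g)) ^+ 2)
    <= Num.sqrt ((alpha * ((evec k.+1 k)^T *m xi) 0 0) ^+ 2
               + (betac * ((evec k k.-1)^T *m xhi) 0 0) ^+ 2) * specnorm Rm.
Proof.
move=> hrank hZ hQ hup hunit hk hv hA1 hA2 hB1 hB2 hJ hJc hX hXh hY hcs i.
rewrite /is_true; cbv zeta.
set xi := col (widen_ord (leqnSn k) i) X.
set xhi := col i Xh. set yi := col i Y.
set uA := U *m xi. set uB := Uh *m xhi. set g := invmx Rm *m Vk *m yi.
rewrite mul_col_mx in hZ; case/eq_col_mx: hZ => hAe hBe.
set e1 := ((evec k.+1 k)^T *m xi) 0 0.
set e2 := ((evec k k.-1)^T *m xhi) 0 0.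
set ci := c 0 i; set si := s 0 i.
set w := Vk *m yi.
set P := Rm^T *m w; set Qv := Rm^T *m v.
have F1 : X^T *m xi = col (widen_ord (leqnSn k) i) 1%:M by rewrite /xi -colM hX.
have F1h : Xh^T *m xhi = col i 1%:M by rewrite /xhi -colM hXh.
have F2 : Y^T *m yi = col i 1%:M by rewrite /yi -colM hY.
have G1 : J^T *m xi = ci *: yi.
  rewrite hJ !trmx_mul trmxK -!mulmxA F1 dp1 -scalemxAr mul_col1 //.
have G2 : J *m yi = ci *: xi.
  rewrite hJ -!mulmxA F2 dp2 -scalemxAr mul_col1 //.
have G3 : Jc *m yi = si *: xhi.
  rewrite hJc -!mulmxA F2 dg -scalemxAr mul_col1 //.
have G4 : Jc^T *m xhi = si *: yi.
  rewrite hJc !trmx_mul trmxK tr_diag_mx -!mulmxA F1h dg -scalemxAr mul_col1 //.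
have EV1 : v *m (evec k.+1 k)^T *m xi = e1 *: v.
  by rewrite -mulmxA [_ *m xi]mx11_scalar mul_mx_scalar.
have EV2 : v *m (evec k k.-1)^T *m xhi = e2 *: v.
  by rewrite -mulmxA [_ *m xhi]mx11_scalar mul_mx_scalar.
have QAuA : QA^T *m uA = ci *: w + (alpha * e1) *: v.
  by rewrite /uA mulmxA hA2 mulmxDl -mulmxA G1 -scalemxAl EV1 scalerA -scalemxAr.
have QBuB : QB^T *m uB = si *: w + (betac * e2) *: v.
  by rewrite /uB mulmxA hB2 mulmxDl -mulmxA G4 -scalemxAl EV2 scalerA -scalemxAr.
have QAw : QA *m w = ci *: uA by rewrite /w mulmxA hA1 -mulmxA G2 -scalemxAr.
have QBw : QB *m w = si *: uB by rewrite /w mulmxA hB1 -mulmxA G3 -scalemxAr.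
have Rg : Rm *m g = w by rewrite /g -mulmxA mulKVmx.
have V1 : si ^+ 2 *: (A^T *m uA) - ci *: (B^T *m B *m g)
    = (si ^+ 2 * (alpha * e1) - ci * si * (betac * e2)) *: Qv.
  rewrite hAe hBe !trmx_mul -!mulmxA QAuA Rg QBw -scalemxAr QBuB.
  rewrite !mulmxDr -!scalemxAr -/P -/Qv.
  rewrite ?mulmxDr -?scalemxAr -/P -/Qv.
  by apply/matrixP => a b; rewrite !mxE; ring.
have V2 : ci ^+ 2 *: (B^T *m uB) - si *: (A^T *m A *m g)
    = (ci ^+ 2 * (betac * e2) - si * ci * (alpha * e1)) *: Qv.
  rewrite hAe hBe !trmx_mul -!mulmxA QBuB Rg QAw -scalemxAr QAuA.
  rewrite !mulmxDr -!scalemxAr -/P -/Qv.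
  rewrite ?mulmxDr -?scalemxAr -/P -/Qv.
  by apply/matrixP => a b; rewrite !mxE; ring.
rewrite V1 V2 !vnorm2Z !exprMn !real_normK ?num_real // -mulrDl.
have N0 : 0 <= vnorm2 Qv by apply: vnorm2_ge0.
rewrite sqrtrM ?addr_ge0 ?sqr_ge0 // sqrtr_sqr ger0_norm //.
apply: ler_pM => //; first exact: sqrtr_ge0.
  rewrite -!exprMn ler_sqrt ?addr_ge0 ?sqr_ge0 //.
  have hc := hcs i; rewrite -/ci -/si in hc.
  exact: fin.
exact: specnorm_tr.
Qed.
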